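(* For every $l\in w_{1+\infty}$, with $\tilde l=\frac12(l-\iota(l))$ its anti-symmetrization, one has $[\hat l^B,\phi(z)]=[\hat{\tilde l}^B,\phi(z)]$.
   Context: Neutral fermions $\{\phi_i\}_{i\in\mathbb{Z}}$ satisfy $[\phi_i,\phi_j]_+=(-1)^i\delta_{i+j,0}$, acting on the Fock space generated from a vacuum $|0\rangle$ with $\phi_i|0\rangle=0$ for $i<0$; $\langle0|\phi_i=0$ for $i>0$, $\langle0|0\rangle=1$, $\langle0|\phi_0|0\rangle=0$. $\phi(z)=\sum_i\phi_iz^i$; $:\!\phi_i\phi_j\!:\,=\phi_i\phi_j-\langle0|\phi_i\phi_j|0\rangle$. $w_{1+\infty}=\mathrm{span}_{\mathbb{C}}\{z^i\partial_z^j\}$ with involution $\iota(z^k(z\partial_z)^m)=(-z\partial_z)^m(-z)^k$. The B-type realization is $\hat l^B=\frac12\mathrm{Res}_w\,w^{-1}:\!\phi(z)\,(l_w\cdot\phi(w))\!:\big|_{z=-w}$. *)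

(* Defs.v *)
From HB Require Import structures.
From mathcomp Require Import all_boot all_order all_algebra.
From Stdlib Require Import ClassicalEpsilon.

Set Implicit Arguments.
Unset Strict Implicit.
Unset Printing Implicit Defensive.

Import Order.TTheory GRing.Theory Num.Theory.
Local Open Scope ring_scope.

Definition sgnz (R : numClosedFieldType) (i : int) : R := (-1) ^+ `|i|%N.

(* Elements of w_{1+oo}: a finite list of pairs (k, p) standing for the
   operator  sum_{(k,p)} z^k p(z d/dz),  p a polynomial.  Every element
   sum c_{k,m} z^k (z d_z)^m of w_{1+oo} is of this form. *)
Definition wop (R : numClosedFieldType) := seq (int * {poly R}).

(* the involution iota(z^k (z d_z)^m) = (-z d_z)^m (-z)^k
   = (-1)^k z^k (-(z d_z) - k)^m, extended linearly *)
Definition iotaW (R : numClosedFieldType) (l : wop R) : wop R :=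
  [seq (e.1, sgnz R e.1 *: (e.2 \Po (- 'X - (e.1)%:~R%:P))) | e <- l].

Definition antisym (R : numClosedFieldType) (l : wop R) : wop R :=
  [seq (e.1, 2^-1 *: e.2) | e <- l] ++ [seq (e.1, - 2^-1 *: e.2) | e <- iotaW l].

Section Fermions.
Variable R : numClosedFieldType.
Variable V : lmodType R.
Variable phi : int -> {linear V -> V}.
Variable bra : V -> R.
Variable vac : V.

(* the Fock space is generated from the vacuum by the phi_i *)
Inductive fock_gen : V -> Prop :=
  | fg_vac : fock_gen vac
  | fg_phi i v : fock_gen v -> fock_gen (phi i v)
  | fg_add u v : fock_gen u -> fock_gen v -> fock_gen (u + v)
  | fg_scale (a : R) v : fock_gen v -> fock_gen (a *: v).

Definition vev (i j : int) : R := bra (phi i (phi j vac)).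

Definition nord (i j : int) (v : V) : V := phi i (phi j v) - vev i j *: v.

(* l_w . phi(w) = sum_j sum_{(k,p)} p(j) phi_j w^{j+k}; phi(z)|_{z=-w} =
   sum_i (-1)^i phi_i w^i; Res_w w^{-1} picks the coefficient of w^0, i.e.
   j = -i-k.  Truncation of the i-sum to -N <= i <= N: *)
Definition hatB_trunc (l : wop R) (N : nat) (v : V) : V :=
  2^-1 *: \sum_(t < (2 * N).+1)
     \sum_(e <- l) (sgnz R (t%:Z - N%:Z) * (e.2).[(- (t%:Z - N%:Z) - e.1)%:~R])
                    *: nord (t%:Z - N%:Z) (- (t%:Z - N%:Z) - e.1) v.

(* hat l^B v : the (eventually stationary) value of the infinite sum *)
Definition hatB (l : wop R) (v : V) : V :=
  epsilon (inhabits 0)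
    (fun w => exists N0 : nat, forall N : nat, (N0 <= N)%N -> hatB_trunc l N v = w).

End Fermions.

(* Main.v *)
Require Import Defs.
From HB Require Import structures.
From mathcomp Require Import all_boot all_order all_algebra zify ring.
Import Order.TTheory GRing.Theory Num.Theory.
Local Open Scope ring_scope.
Set Implicit Arguments.
Unset Strict Implicit.

Definition W (N : nat) : seq int := [seq t%:Z - N%:Z | t <- iota 0 (2 * N).+1].

Lemma memW N i : (i \in W N) = (- N%:Z <= i) && (i <= N%:Z).
Proof.
apply/mapP/andP.
  move=> [t]; rewrite mem_iota => /andP[_ ht] ->; split; lia.
move=> [h1 h2]; exists (absz (i + N%:Z)).
  rewrite mem_iota; apply/andP; split; lia.
lia.
Qed.

Lemma uniqW N : uniq (W N).
Proof.
rewrite map_inj_uniq ?iota_uniq // => a b /addIr; lia.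
Qed.

Lemma sgnzD (R : numClosedFieldType) (a b : int) : sgnz R (a + b) = sgnz R a * sgnz R b.
Proof.
rewrite /sgnz -exprD.
have -> : (absz a + absz b = absz (a + b)%R + 2 * ((absz a + absz b - absz (a+b)%R) %/ 2))%N by lia.
by rewrite exprD exprM sqrrN !expr1n mulr1.
Qed.

Lemma sgnzN (R : numClosedFieldType) (a : int) : sgnz R (- a) = sgnz R a.
Proof. by rewrite /sgnz abszN. Qed.

Lemma sgnz_sq (R : numClosedFieldType) (a : int) : sgnz R a * sgnz R a = 1.
Proof. by rewrite /sgnz -exprD -signr_odd oddD addbb. Qed.

Lemma big_supp (R : numClosedFieldType) (V : lmodType R) (s S : seq int) (f : int -> V) :
  uniq s -> uniq S -> {subset S <= s} -> (forall i, i \notin S -> f i = 0) ->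
  \sum_(i <- s) f i = \sum_(i <- S) f i.
Proof.
move=> us uS sub f0.
rewrite (bigID (fun i => i \in S)) /= [X in _ + X]big1 ?addr0; last first.
  by move=> i /f0.
rewrite -big_filter; apply: perm_big; apply: uniq_perm; rewrite ?filter_uniq //.
by move=> x; rewrite mem_filter; case xS: (x \in S) => //=; rewrite sub.
Qed.

Lemma bra0 (R : numClosedFieldType) (V : lmodType R) (bra : V -> R)
  (Hbra_lin : forall (a : R) (u v : V), bra (a *: u + v) = a * bra u + bra v) :
  bra 0 = 0.
Proof.
have := Hbra_lin 1 0 0; rewrite scaler0 addr0 mul1r => h.
by apply: (@addrI _ (bra 0)); rewrite -h addr0.
Qed.

Lemma nord_anti (R : numClosedFieldType) (V : lmodType R)
  (phi : int -> {linear V -> V}) (bra : V -> R) (vac : V)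
  (Hanti : forall (i j : int) (v : V),
     phi i (phi j v) + phi j (phi i v) = (if i + j == 0 then sgnz R i else 0) *: v)
  (Hbra_lin : forall (a : R) (u v : V), bra (a *: u + v) = a * bra u + bra v)
  (Hbra1 : bra vac = 1) i j v :
  nord phi bra vac j i v = - nord phi bra vac i j v.
Proof.
have hv : vev phi bra vac j i + vev phi bra vac i j = (if j + i == 0 then sgnz R j else 0).
  rewrite /vev -[bra (phi j _)]mul1r -Hbra_lin scale1r Hanti -[_ *: vac]addr0 Hbra_lin.
  by rewrite bra0 // Hbra1 mulr1 addr0.
apply/eqP; rewrite -subr_eq0 opprK /nord addrACA Hanti -opprD -scalerDl.
by rewrite hv subrr.
Qed.

Lemma fock_low (R : numClosedFieldType) (V : lmodType R)
  (phi : int -> {linear V -> V}) (vac : V)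
  (Hanti : forall (i j : int) (v : V),
     phi i (phi j v) + phi j (phi i v) = (if i + j == 0 then sgnz R i else 0) *: v)
  (Hvac : forall i : int, i < 0 -> phi i vac = 0) v :
  fock_gen phi vac v -> exists M : nat, forall j : int, j <= - M%:Z -> phi j v = 0.
Proof.
elim=> {v} [|i v _ [M HM]|u v _ [M1 H1] _ [M2 H2]|a v _ [M HM]].
- by exists 1%N => j hj; apply: Hvac; lia.
- exists (M + absz i + 1)%N => j hj.
  have := Hanti j i v; rewrite (HM j); last by lia.
  rewrite linear0 addr0 => ->.
  have -> : (j + i == 0) = false by apply/negP => /eqP; lia.
  by rewrite scale0r.
- exists (M1 + M2)%N => j hj; rewrite linearD H1 ?H2 ?addr0 //; lia.
- exists M => j hj; by rewrite linearZ /= (HM j) // scaler0.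
Qed.

Definition Fk (R : numClosedFieldType) (V : lmodType R)
  (phi : int -> {linear V -> V}) (bra : V -> R) (vac : V) (v : V)
  (k : int) (p : {poly R}) (i : int) : V :=
  (sgnz R i * p.[(- i - k)%:~R]) *: nord phi bra vac i (- i - k) v.

Lemma trunc_eq (R : numClosedFieldType) (V : lmodType R)
  (phi : int -> {linear V -> V}) (bra : V -> R) (vac : V) l N v :
  hatB_trunc phi bra vac l N v =
  2^-1 *: \sum_(e <- l) \sum_(i <- W N) Fk phi bra vac v e.1 e.2 i.
Proof.
rewrite /hatB_trunc exchange_big /=; congr (_ *: _); apply: eq_bigr => e _.
by rewrite /W big_map -(big_mkord xpredT (fun t => Fk phi bra vac v e.1 e.2 (t%:Z - N%:Z))) /index_iota subn0.
Qed.

Lemma nord_zero (R : numClosedFieldType) (V : lmodType R)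
  (phi : int -> {linear V -> V}) (bra : V -> R) (vac : V)
  (Hbra : forall (i : int) (v : V), 0 < i -> bra (phi i v) = 0) a b v :
  0 < a -> phi b v = 0 -> nord phi bra vac a b v = 0.
Proof.
by move=> ha hb; rewrite /nord /vev hb linear0 Hbra // scale0r subr0.
Qed.

Lemma Fk_supp (R : numClosedFieldType) (V : lmodType R)
  (phi : int -> {linear V -> V}) (bra : V -> R) (vac : V)
  (Hanti : forall (i j : int) (v : V),
     phi i (phi j v) + phi j (phi i v) = (if i + j == 0 then sgnz R i else 0) *: v)
  (Hbra_lin : forall (a : R) (u v : V), bra (a *: u + v) = a * bra u + bra v)
  (Hbra : forall (i : int) (v : V), 0 < i -> bra (phi i v) = 0)
  (Hbra1 : bra vac = 1) (v : V) (M : nat)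
  (HM : forall j : int, j <= - M%:Z -> phi j v = 0) k p i :
  i \notin W (M + absz k + 1) -> Fk phi bra vac v k p i = 0.
Proof.
rewrite memW negb_and -!ltNge => /orP[hi|hi]; rewrite /Fk.
  rewrite (nord_anti Hanti Hbra_lin Hbra1) nord_zero ?oppr0 ?scaler0 //; try lia.
  by apply: HM; lia.
by rewrite nord_zero ?scaler0 //; try lia; apply: HM; lia.
Qed.

Lemma Fk_iota (R : numClosedFieldType) (V : lmodType R)
  (phi : int -> {linear V -> V}) (bra : V -> R) (vac : V)
  (Hanti : forall (i j : int) (v : V),
     phi i (phi j v) + phi j (phi i v) = (if i + j == 0 then sgnz R i else 0) *: v)
  (Hbra_lin : forall (a : R) (u v : V), bra (a *: u + v) = a * bra u + bra v)
  (Hbra1 : bra vac = 1) (v : V) k p i :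
  Fk phi bra vac v k (sgnz R k *: (p \Po (- 'X - k%:~R%:P))) i
  = - Fk phi bra vac v k p (- i - k).
Proof.
rewrite /Fk hornerZ horner_comp !hornerE.
have -> : - (- i - k)%:~R - k%:~R = i%:~R :> R by rewrite !intrB !intrN; ring.
have -> : - (- i - k) - k = i by ring.
rewrite (nord_anti Hanti Hbra_lin Hbra1) scalerN; congr (- (_ *: _)).
have -> : - i - k = - (i + k) by ring.
by rewrite sgnzN sgnzD.
Qed.

Lemma subW M N : (M <= N)%N -> {subset W M <= W N}.
Proof. by move=> h x; rewrite !memW => /andP[a b]; apply/andP; split; lia. Qed.

Lemma per_e (R : numClosedFieldType) (V : lmodType R)
  (phi : int -> {linear V -> V}) (bra : V -> R) (vac : V)
  (Hanti : forall (i j : int) (v : V),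
     phi i (phi j v) + phi j (phi i v) = (if i + j == 0 then sgnz R i else 0) *: v)
  (Hbra_lin : forall (a : R) (u v : V), bra (a *: u + v) = a * bra u + bra v)
  (Hbra : forall (i : int) (v : V), 0 < i -> bra (phi i v) = 0)
  (Hbra1 : bra vac = 1) (v : V) (M : nat)
  (HM : forall j : int, j <= - M%:Z -> phi j v = 0) k p N :
  (M + absz k + 1 + absz k <= N)%N ->
  \sum_(i <- W N) Fk phi bra vac v k (sgnz R k *: (p \Po (- 'X - k%:~R%:P))) i
  = - \sum_(i <- W N) Fk phi bra vac v k p i.
Proof.
move=> hN.
have supp : forall i, i \notin W (M + absz k + 1) -> Fk phi bra vac v k p i = 0.
  by move=> i; apply: (Fk_supp Hanti Hbra_lin Hbra Hbra1 HM).
rewrite (big_supp (S := W (M + absz k + 1)) (f := Fk phi bra vac v k p)) ?uniqW //; last first.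
  by apply: subW; lia.
under eq_bigr => i _ do rewrite (Fk_iota Hanti Hbra_lin Hbra1).
rewrite sumrN -(big_map (fun i => - i - k) xpredT (Fk phi bra vac v k p)).
rewrite (big_supp (S := W (M + absz k + 1)) (f := Fk phi bra vac v k p)) ?uniqW //.
  by rewrite map_inj_uniq ?uniqW // => a b /addIr; apply: oppr_inj.
move=> j; rewrite memW => /andP[h1 h2].
have -> : j = - (- j - k) - k by ring.
apply/mapP; exists (- j - k) => //; rewrite memW; apply/andP; split; lia.
Qed.

Lemma FkZ (R : numClosedFieldType) (V : lmodType R)
  (phi : int -> {linear V -> V}) (bra : V -> R) (vac : V) v k c p N :
  \sum_(i <- W N) Fk phi bra vac v k (c *: p) i = c *: \sum_(i <- W N) Fk phi bra vac v k p i.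
Proof.
rewrite scaler_sumr; apply: eq_bigr => i _.
by rewrite /Fk hornerZ scalerA; congr (_ *: _); ring.
Qed.

Lemma trunc_anti (R : numClosedFieldType) (V : lmodType R)
  (phi : int -> {linear V -> V}) (bra : V -> R) (vac : V)
  (Hanti : forall (i j : int) (v : V),
     phi i (phi j v) + phi j (phi i v) = (if i + j == 0 then sgnz R i else 0) *: v)
  (Hbra_lin : forall (a : R) (u v : V), bra (a *: u + v) = a * bra u + bra v)
  (Hbra : forall (i : int) (v : V), 0 < i -> bra (phi i v) = 0)
  (Hbra1 : bra vac = 1) (v : V) (M : nat)
  (HM : forall j : int, j <= - M%:Z -> phi j v = 0) (l : wop R) N :
  (M + 2 * \max_(e <- l) absz e.1 + 1 <= N)%N ->
  hatB_trunc phi bra vac (antisym l) N v = hatB_trunc phi bra vac l N v.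
Proof.
move=> hN.
rewrite !trunc_eq /antisym big_cat /= !big_map /iotaW -big_split /=.
congr (_ *: _); apply: eq_big_seq => e el /=.
rewrite 2!FkZ (per_e Hanti Hbra_lin Hbra Hbra1 HM); last first.
  have := @leq_bigmax_seq _ l (fun _ => true) (fun e : int * {poly R} => absz e.1) e el erefl; move: hN; set m := \max_(_ <- _) _ => hN hm; move: hm; rewrite -/m => hm; clearbody m; move: hm; set a := absz _ => hm; clearbody a; lia.
have h2 : (2 : R) != 0 by rewrite pnatr_eq0.
have h1 : (2^-1 + 2^-1 : R) = 1 by field.
by rewrite scalerN scaleNr opprK -scalerDl h1 scale1r.
Qed.

From Stdlib Require Import ClassicalEpsilon FunctionalExtensionality PropExtensionality.

Lemma hatB_anti (R : numClosedFieldType) (V : lmodType R)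
  (phi : int -> {linear V -> V}) (bra : V -> R) (vac : V)
  (Hanti : forall (i j : int) (v : V),
     phi i (phi j v) + phi j (phi i v) = (if i + j == 0 then sgnz R i else 0) *: v)
  (Hvac : forall i : int, i < 0 -> phi i vac = 0)
  (Hbra_lin : forall (a : R) (u v : V), bra (a *: u + v) = a * bra u + bra v)
  (Hbra : forall (i : int) (v : V), 0 < i -> bra (phi i v) = 0)
  (Hbra1 : bra vac = 1) (l : wop R) (v : V) :
  fock_gen phi vac v ->
  hatB phi bra vac l v = hatB phi bra vac (antisym l) v.
Proof.
move=> /(fock_low Hanti Hvac) [M HM].
set N1 := (M + 2 * \max_(e <- l) absz e.1 + 1)%N.
have ht : forall N, (N1 <= N)%N ->
    hatB_trunc phi bra vac (antisym l) N v = hatB_trunc phi bra vac l N v.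
  by move=> N hN; apply: (trunc_anti Hanti Hbra_lin Hbra Hbra1 HM).
rewrite /hatB; congr (epsilon _ _).
apply: functional_extensionality => w; apply: propositional_extensionality.
split=> [[N0 H]|[N0 H]]; exists (maxn N0 N1) => N hN.
  rewrite ht ?H //; lia.
rewrite -ht ?H //; lia.
Qed.

Unset Implicit Arguments.
Set Strict Implicit.

Theorem corollary3p5 (R : numClosedFieldType) (V : lmodType R)
  (phi : int -> {linear V -> V}) (bra : V -> R) (vac : V)
  (Hanti : forall (i j : int) (v : V),
     phi i (phi j v) + phi j (phi i v) = (if i + j == 0 then sgnz R i else 0) *: v)
  (Hvac : forall i : int, i < 0 -> phi i vac = 0)
  (Hbra_lin : forall (a : R) (u v : V), bra (a *: u + v) = a * bra u + bra v)
  (Hbra : forall (i : int) (v : V), 0 < i -> bra (phi i v) = 0)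
  (Hbra1 : bra vac = 1)
  (Hbra0 : bra (phi 0 vac) = 0)
  (Hgen : forall v : V, fock_gen phi vac v)
  (l : wop R) :
  forall (n : int) (v : V),
    hatB phi bra vac l (phi n v) - phi n (hatB phi bra vac l v)
    = hatB phi bra vac (antisym l) (phi n v) - phi n (hatB phi bra vac (antisym l) v).
Proof.
move=> n v.
by rewrite !(hatB_anti Hanti Hvac Hbra_lin Hbra Hbra1 l (Hgen _)).
Qed.
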